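(* Let $X$ be a separable Banach space, $Y$ a closed subspace of $X$, $\xi: Y\to X$ the identical embedding, and $\Gamma$ a linear (not necessarily closed) subspace of $Y^{*}$. Then for every ordinal $\alpha$ we have $(\xi^{*})^{-1}(\Gamma_{(\alpha)}) = \big((\xi^{*})^{-1}\Gamma\big)_{(\alpha)}$, where $\xi^*: X^*\to Y^*$ is the adjoint (restriction) operator.
   Context: For a Banach space $Z$ and a subset $\Gamma\subset Z^*$, the weak$^*$-derived set $\Gamma_{(1)}$ is the set of all limits of weak$^*$-convergent sequences of elements of $\Gamma$. Weak$^*$-derived sets of arbitrary ordinal order are defined inductively by $\Gamma_{(0)}=\Gamma$ and $\Gamma_{(\alpha)}=\bigcup_{\beta<\alpha}(\Gamma_{(\beta)})_{(1)}$ for $\alpha\ge 1$. *)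

(* Defs.v *)
From HB Require Import structures.
From mathcomp Require Import all_boot all_order all_algebra.
From mathcomp Require Import all_classical all_reals all_analysis.
Set Implicit Arguments. Unset Strict Implicit. Unset Printing Implicit Defensive.
Import Order.TTheory GRing.Theory Num.Theory.
Import numFieldNormedType.Exports.
Local Open Scope classical_set_scope.
Local Open Scope ring_scope.

Section Defs.
Variable R : realType.

Definition is_linear_map (U W : lmodType R) (f : U -> W) : Prop :=
  forall (a : R) (u v : U), f (a *: u + v) = a *: f u + f v.

Definition is_dual (V : normedModType R) (f : V -> R) : Prop :=
  (forall (a : R) (u v : V), f (a *: u + v) = a * f u + f v) /\ continuous f.

Definition dual_subspace (V : normedModType R) (G : set (V -> R)) : Prop :=
  G `<=` (@is_dual V) /\ G (fun _ => 0) /\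
  (forall f g, G f -> G g -> G (fun v => f v + g v)) /\
  (forall (a : R) f, G f -> G (fun v => a * f v)).

Definition separable (X : normedModType R) : Prop :=
  exists D : set X, countable D /\ closure D = setT.

Definition wstar_derived1 (V : normedModType R) (G : set (V -> R)) : set (V -> R) :=
  [set f | is_dual f /\
     exists u : nat -> V -> R, (forall n, G (u n)) /\
       forall v, (fun n => u n v) @ \oo --> f v].

(* weak*-derived set of order alpha, where alpha ranges over a well-ordered
   type (O, lt): G_(alpha) = G if alpha is minimal (alpha = 0), and
   G_(alpha) = \bigcup_{beta < alpha} (G_(beta))_(1) otherwise. *)
Definition wstar_derived (V : normedModType R) (O : Type) (lt : O -> O -> Prop)
  (wf : well_founded lt) (G : set (V -> R)) : O -> set (V -> R) :=
  Fix wf (fun _ => set (V -> R))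
    (fun a rec =>
       [set f | ((forall b, ~ lt b a) /\ G f) \/
                exists b (h : lt b a), wstar_derived1 (rec b h) f]).

Definition adj_preimage (X Y : normedModType R) (xi : Y -> X) (G : set (Y -> R))
  : set (X -> R) :=
  [set f | is_dual f /\ G (f \o xi)].

Definition strict_well_order (O : Type) (lt : O -> O -> Prop) : Prop :=
  (forall a b c, lt a b -> lt b c -> lt a c) /\
  (forall a b, lt a b \/ a = b \/ lt b a) /\
  (forall a, ~ lt a a).

End Defs.

(* Main.v *)
Require Import Defs.
From HB Require Import structures.
From mathcomp Require Import all_boot all_order all_algebra.
From mathcomp Require Import all_classical all_reals all_analysis.
From mathcomp Require Import ring lra.
Import Order.TTheory GRing.Theory Num.Theory.
Import numFieldNormedType.Exports.
Local Open Scope classical_set_scope.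
Local Open Scope ring_scope.

Definition complete_prop {R : realType} (Y : normedModType R) :=
  forall F : set_system Y, ProperFilter F -> cauchy F -> cvg F.
Definition Yc {R : realType} {Y : normedModType R} (h : complete_prop Y) : Type := Y.
HB.instance Definition _ (R : realType) (Y : normedModType R) (h : complete_prop Y) :=
  NormedModule.on (Yc h).
HB.instance Definition _ (R : realType) (Y : normedModType R) (h : complete_prop Y) :=
  Uniform_isComplete.Build (Yc h) h.

Section Main.
Variable R : realType.

Definition linf {V : normedModType R} (f : V -> R) : Prop :=
  forall (a : R) (u v : V), f (a *: u + v) = a * f u + f v.

Section B.
Context {V : normedModType R}.
Implicit Types f : V -> R.

Lemma linf0 f : linf f -> f 0 = 0.
Proof.
move=> lf; have := lf 1 0 0; rewrite scaler0 addr0 mul1r => h.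
by have := congr1 (fun t => t - f 0) h; rewrite subrr addrK.
Qed.

Lemma linfD f u v : linf f -> f (u + v) = f u + f v.
Proof. by move=> lf; rewrite -[u in LHS]scale1r lf mul1r. Qed.

Lemma linfZ f a u : linf f -> f (a *: u) = a * f u.
Proof. by move=> lf; rewrite -[_ *: _]addr0 lf linf0 // addr0. Qed.

Lemma linfN f u : linf f -> f (- u) = - f u.
Proof. by move=> lf; rewrite -scaleN1r linfZ // mulN1r. Qed.

Lemma linfB f u v : linf f -> f (u - v) = f u - f v.
Proof. by move=> lf; rewrite linfD // linfN. Qed.

Lemma bounded_cont f C : linf f -> (forall x, `|f x| <= C * `|x|) -> continuous f.
Proof.
move=> lf fb x; apply/cvgrPdist_lt => e e0.
apply/nbhs_normP; exists (e / (`|C| + 1)).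
  by rewrite /= divr_gt0 // ltr_wpDl.
move=> z /=; rewrite -linfB // => hz.
apply: (le_lt_trans (fb _)); apply: (le_lt_trans (ler_wpM2r _ (real_ler_norm _))) => //.
  by rewrite num_real.
have h1 : 0 < `|C| + 1 by rewrite ltr_wpDl.
rewrite -(ltr_pM2l h1) in hz; rewrite mulrC mulrCA divff ?mulr1 in hz; last by rewrite gt_eqF.
by apply: le_lt_trans hz; rewrite mulrC ler_wpM2r // lerDl.
Qed.

Lemma cont_bounded f : linf f -> continuous f ->
  exists C, 0 < C /\ forall x, `|f x| <= C * `|x|.
Proof.
move=> lf cf; have /cvgrPdist_lt /(_ 1 ltr01) := cf 0.
move=> /nbhs_normP [d /= d0 hd].
exists (2 / d); split; first by rewrite divr_gt0.
move=> x; have [->|x0] := eqVneq x 0; first by rewrite linf0 // !normr0 mulr0.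
have nx : 0 < `|x| by rewrite normr_gt0.
set t := d / (2 * `|x|).
have t0 : 0 < t by rewrite divr_gt0 // mulr_gt0.
have htx : t * `|x| = d / 2.
  rewrite /t; field; by rewrite gt_eqF.
have := hd (t *: x); rewrite /= sub0r normrN normrZ gtr0_norm // htx.
rewrite linf0 // sub0r normrN linfZ // normrM gtr0_norm //.
move=> /(_ _) h; have {h} : t * `|f x| < 1 by apply: h; lra.
move=> h; rewrite -(ler_pM2l t0) ; apply: ltW; apply: (lt_le_trans h).
rewrite mulrCA htx (_ : 2 / d * (d / 2) = 1) //; field; by rewrite gt_eqF.
Qed.

End B.

Lemma scale_norm_inv (W : normedModType R) (s : R) (v w : W) : 0 < s ->
  s * `|s^-1 *: v + w| = `|v + s *: w|.
Proof.
move=> s0; rewrite -{1}(gtr0_norm s0) -normrZ scalerDr scalerA.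
by rewrite divff ?gt_eqF // scale1r.
Qed.

Section HahnBanach.
Variables (X Y : normedModType R) (xi : Y -> X) (u : Y -> R) (C : R).
Hypothesis xilin : forall a y y', xi (a *: y + y') = a *: xi y + xi y'.
Hypothesis ulin : linf u.
Hypothesis C0 : 0 <= C.
Hypothesis ub : forall y, u y <= C * `|xi y|.

Let xi0 : xi 0 = 0.
Proof.
have := xilin 1 0 0; rewrite scaler0 addr0 scale1r => h.
by have := congr1 (fun t => t - xi 0) h; rewrite subrr addrK.
Qed.

Definition Good (S : set (X * R)) : Prop :=
  (forall p q a, S p -> S q -> S (a *: p.1 + q.1, a * p.2 + q.2)) /\
  (forall p, S p -> p.2 <= C * `|p.1|).

Let G0 : set (X * R) := [set p | exists y, p = (xi y, u y)].

Let goodG0 : Good G0.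
Proof.
split.
  move=> p q a [y ->] [y' ->] /=; exists (a *: y + y').
  by rewrite xilin ulin.
by move=> p [y ->] /=.
Qed.

Let P (A : set (X * R)) := Good (A `|` G0).

Lemma Good_sub (S : set (X * R)) p : Good S -> S p -> p.2 <= C * `|p.1|.
Proof. by move=> [_ h] /h. Qed.

Lemma Good_lin (S : set (X * R)) p q a : Good S -> S p -> S q ->
  S (a *: p.1 + q.1, a * p.2 + q.2).
Proof. by move=> [h _]; apply: h. Qed.
Arguments Good_lin {S p q} a.
Arguments Good_sub {S p}.

Let chainP (F : set (set (X * R))) : F `<=` P -> total_on F subset ->
  P (\bigcup_(A in F) A).
Proof.
move=> FP tot.
have two : forall p q, (\bigcup_(A in F) A `|` G0) p -> (\bigcup_(A in F) A `|` G0) q ->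
   exists A, [/\ P A, A `<=` \bigcup_(A in F) A, (A `|` G0) p & (A `|` G0) q].
  move=> p q [[A FA Ap]|G0p] [[B FB Bq]|G0q].
  - have [AB|BA] := tot _ _ FA FB.
      exists B; split => //; [exact: FP|exact: bigcup_sup|by left; apply: AB|by left].
    exists A; split => //; [exact: FP|exact: bigcup_sup|by left|by left; apply: BA].
  - exists A; split => //; [exact: FP|exact: bigcup_sup|by left|by right].
  - exists B; split => //; [exact: FP|exact: bigcup_sup|by right|by left].
  - exists set0; split => //; [|by right|by right].
    by rewrite /P set0U.
split.
  move=> p q a hp hq; have [A [PA AF Ap Aq]] := two p q hp hq.
  have := Good_lin a PA Ap Aq; case=> [h|h]; [left; exact: AF|by right].
move=> p hp; have [A [PA AF Ap _]] := two p p hp hp.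
exact: Good_sub PA Ap.
Qed.

Lemma hahn_banach : exists psi : X -> R, linf psi /\
  (forall y, psi (xi y) = u y) /\ (forall x, psi x <= C * `|x|).
Proof.
have [A [PA Amax]] := Zorn_bigcup chainP.
set H := A `|` G0.
have H0 : H (0, 0).
  by right; exists 0; rewrite xi0 (linf0 _ ulin).
have Hfun : forall x a b, H (x, a) -> H (x, b) -> a = b.
  move=> x a b ha hb.
  have h1 := Good_sub PA (Good_lin (-1) PA ha hb).
  have h2 := Good_sub PA (Good_lin (-1) PA hb ha).
  move: h1 h2; rewrite /= scaleN1r addNr normr0 mulr0 => h1 h2.
  apply/eqP; rewrite eq_le; apply/andP; split; lra.
have Htot : forall x, exists a, H (x, a).
  move=> x; apply: contrapT => nx.
  pose E := [set r | exists p, H p /\ r = p.2 - C * `|p.1 - x|].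
  have E0 : E !=set0.
    by exists (0 - C * `|0 - x|); exists (0, 0).
  have Eub : forall q, H q -> ubound E (C * `|q.1 + x| - q.2).
    move=> q Hq r [p [Hp ->]].
    have := Good_sub PA (Good_lin 1 PA Hp Hq); rewrite /= scale1r mul1r => h.
    have : `|p.1 + q.1| <= `|p.1 - x| + `|q.1 + x|.
      by rewrite (_ : p.1 + q.1 = (p.1 - x) + (q.1 + x)) ?ler_normD // addrACA addNr addr0.
    move=> /(ler_wpM2l C0); rewrite mulrDr => h'.
    lra.
  have hasub : has_ubound E by exists (C * `|(0:X) + x| - 0); exact: (Eub (0, 0) H0).
  set c := sup E.
  have cge : forall p, H p -> p.2 - C * `|p.1 - x| <= c.
    by move=> p Hp; apply: ub_le_sup => //; exists p.
  have cle : forall q, H q -> c <= C * `|q.1 + x| - q.2.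
    by move=> q Hq; apply: ge_sup => //; apply: Eub.
  pose B := [set p | exists q t, H q /\ p = (q.1 + t *: x, q.2 + t * c)].
  have HB : H `<=` B.
    by move=> p Hp; exists p, 0; rewrite scale0r mul0r !addr0; case: p Hp.
  have goodB : Good B.
    split.
      move=> p p' a [q [t [Hq ->]]] [q' [t' [Hq' ->]]] /=.
      exists (a *: q.1 + q'.1, a * q.2 + q'.2), (a * t + t'); split.
        exact: Good_lin.
      congr (_, _) => /=.
        by rewrite scalerDr scalerA addrACA -scalerDl.
      by rewrite mulrDr mulrA addrACA -mulrDl.
    move=> p [q [t [Hq ->]]] /=.
    have [t0|t0|->] := ltgtP t 0; last first.
    - by rewrite scale0r mul0r !addr0; apply: Good_sub Hq.
    - have := cle _ (Good_lin t^-1 PA Hq H0); rewrite /= !addr0.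
      rewrite -(ler_pM2l t0) mulrBr mulrCA scale_norm_inv // mulrA divff ?gt_eqF // mul1r.
      lra.
    - set s := - t; have s0 : 0 < s by rewrite /s oppr_gt0.
      have := cge _ (Good_lin s^-1 PA Hq H0); rewrite /= !addr0 => h.
      have e : s * `|s^-1 *: q.1 - x| = `|q.1 + t *: x|.
        by rewrite -scaleN1r scale_norm_inv // scalerA /s mulrN1 opprK.
      rewrite -(ler_pM2l s0) mulrBr mulrA divff ?gt_eqF // mul1r mulrCA e in h.
      rewrite /s mulNr in h; lra.
  have PB : P B.
    rewrite /P (_ : B `|` G0 = B) //; apply/seteqP; split => p; last by left.
    by case => // hp; apply: HB; right.
  apply: (Amax B) => //; split.
    by move=> p Ap; apply: HB; left.
  move=> /(_ (x, c)) hx; apply: nx; exists c; left; apply: hx.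
  by exists (0, 0), 1; rewrite scale1r mul1r !add0r.
have [psi hpsi] := choice Htot.
exists psi; split; [|split].
- move=> a x z; apply: (Hfun (a *: x + z)) => //.
  exact: (Good_lin a PA (hpsi x) (hpsi z)).
- by move=> y; apply: (Hfun (xi y)) => //; right; exists y.
- by move=> x; apply: (Good_sub PA (hpsi x)).
Qed.

End HahnBanach.

Lemma Y_complete (X : completeNormedModType R) (Y : normedModType R) (xi : Y -> X) :
  (forall y y', xi (y - y') = xi y - xi y') -> (forall y, `|xi y| = `|y|) ->
  closed (range xi) -> complete_prop Y.
Proof.
move=> xiB xiiso xicl F FF /cauchyP Fc.
have cX : cauchy (xi @ F).
  apply: cauchy_exP => e e0; have [y Fy] := Fc e e0.
  exists (xi y); rewrite /= /fmap /=; apply: filterS Fy => z.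
  by rewrite -!ball_normE /= -xiB xiiso.
have [l hl] := iffLR (cvg_ex _) (cauchy_cvg _ cX).
have [y0 _ ly0] : range xi l.
  by apply: (closed_cvg _ xicl _ _ hl); apply: nearW => y; exists y.
apply/cvg_ex; exists y0; apply/fcvg_ballP => e e0.
rewrite -ly0 in hl; have h : \forall z \near F, ball (xi y0) e (xi z) by apply: (cvg_ball hl).
move: h.
by apply: filterS => z; rewrite -!ball_normE /= -xiB xiiso.
Qed.

Lemma unif_bound (Y : normedModType R) (hc : complete_prop Y) (u : nat -> Y -> R) :
  (forall n, linf (u n)) -> (forall n, continuous (u n)) ->
  (forall y, exists M, forall n, `|u n y| <= M) ->
  exists C, 0 < C /\ forall n y, `|u n y| <= C * `|y|.
Proof.
move=> ulin ucont upt.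
pose F : set (Yc hc -> R) := [set f | exists n, f = u n].
have H1 : forall f, F f -> bounded_fun_norm f /\ linear f.
  move=> f [n ->]; split; last by move=> a x y; apply: ulin.
  have [C [C0 hC]] := cont_bounded _ (ulin n) (ucont n).
  move=> r; exists (C * r) => x xr; apply: (le_trans (hC x)).
  by rewrite ler_wpM2l // ltW.
have H2 : pointwise_bounded F.
  move=> y; have [M hM] := upt y; exists M => f [n ->]; exact: hM.
have [M hM] := @Banach_Steinhauss R (Yc hc) R F H1 H2 1.
exists (`|M| + 1); split; first by rewrite ltr_wpDl.
move=> n y; have [->|y0] := eqVneq y 0.
  by rewrite (linf0 _ (ulin n)) !normr0 mulr0.
have ny : 0 < `|y| by rewrite normr_gt0.
have := hM (u n) (ex_intro _ n erefl) (`|y|^-1 *: y).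
rewrite normrZ normfV normr_id mulVf ?gt_eqF // lexx => /(_ isT).
rewrite (linfZ _ _ _ (ulin n)) normrM normfV normr_id => h.
have := ler_wpM2l (ltW ny) h; rewrite mulrA divff ?gt_eqF // mul1r => h'.
apply: (le_trans h'); rewrite mulrC ler_wpM2r // ?ltW //.
by apply: (le_lt_trans (ler_norm _)); rewrite ltrDl.
Qed.

Lemma small0 (d : R) : (forall e, 0 < e -> `|d| < e) -> d = 0.
Proof.
move=> h; apply/eqP; rewrite -normr_eq0; apply/negP => nd.
have d0 : 0 < `|d| by rewrite lt_def normr_ge0 andbT; apply/negP.
by have := h _ d0; rewrite ltxx.
Qed.

Section Key.
Import ArrowAsProduct.
Variables (X Y : normedModType R) (xi : Y -> X) (e : nat -> X).

Definition Pk (h : nat -> X -> R) (C : R) (n m : nat) : Prop :=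
  exists k : X -> R, [/\ linf k, (forall y, k (xi y) = 0),
    (forall x, `|k x| <= C * `|x|) &
    forall i, (i < m)%N -> `|h n (e i) - k (e i)| < (m.+1%:R)^-1].

Lemma nbhs_coord (phi : X -> R) (x : X) (eps : R) : 0 < eps ->
  nbhs phi [set psi : X -> R | `|psi x - phi x| < eps].
Proof.
move=> e0; have := @proj_continuous X (fun _ => R) x phi.
move=> /cvgrPdist_lt /(_ eps e0).
by rewrite /proj; apply: filterS => psi /=; rewrite distrC.
Qed.

Lemma key (h : nat -> X -> R) (C : R) (m : nat) : 0 <= C ->
  (forall n, linf (h n)) -> (forall n x, `|h n x| <= C * `|x|) ->
  (forall y, (fun n => h n (xi y)) @ \oo --> (0:R)) ->
  exists N, forall n, (N <= n)%N -> Pk h C n m.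
Proof.
move=> C0 hlin hb hcv; apply: contrapT => nN.
have inf : forall N, exists n, (N <= n)%N /\ ~ Pk h C n m.
  move=> N; apply: contrapT => hN; apply: nN; exists N => n Nn.
  by apply: contrapT => nP; apply: hN; exists n.
pose F := fun S : set nat => exists N, forall n, (N <= n)%N -> ~ Pk h C n m -> S n.
have FF : ProperFilter F.
  apply: Build_ProperFilter.
  - by move=> [N hN]; have [n [Nn nP]] := inf N; exact: hN n Nn nP.
  - constructor.
    + by exists 0%N.
    + move=> A B [N1 h1] [N2 h2]; exists (maxn N1 N2) => n hn nP.
      split; [apply: h1|apply: h2] => //; apply: leq_trans hn.
        exact: leq_maxl.
      exact: leq_maxr.
    + by move=> A B AB [N hN]; exists N => n hn nP; apply: AB; exact: hN.
have Fev : forall S : set nat, \oo S -> F S.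
  by move=> S [N _ hN]; exists N => n Nn _; apply: hN.
pose G := fmap (h : nat -> (X -> R)) F.
have GF : ProperFilter G by apply: fmap_proper_filter.
have Kc : compact [set f : X -> R | forall x, [set r : R | `|r| <= C * `|x|] (f x)].
  have hx : forall x : X, compact [set r : R | `|r| <= C * `|x|].
    move=> x.
    rewrite (_ : [set r : R | `|r| <= C * `|x|] = `[- (C * `|x|), C * `|x|]%classic).
      exact: segment_compact.
    by apply/seteqP; split => r; rewrite /= in_itv /= ler_norml.
  exact: (@tychonoff X (fun _ => R) _ hx).
have GK : G [set f : X -> R | forall x, [set r : R | `|r| <= C * `|x|] (f x)].
  by exists 0%N => n _ _; apply: hb.
have [phi [Kphi clphi]] := Kc G GF GK.
have meet : forall A B, G A -> nbhs phi B -> exists psi, A psi /\ B psi.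
  by move=> A B GA NB; have [psi [Ap Bp]] := clphi A B GA NB; exists psi.
have Glin : G [set psi : X -> R | linf psi] by exists 0%N => n _ _; apply: hlin.
have philin : linf phi.
  move=> a x z; apply/eqP; rewrite -subr_eq0; apply/eqP; apply: small0 => eps e0.
  set del := eps / (`|a| + 2).
  have a2 : 0 < `|a| + 2 by rewrite ltr_wpDl.
  have d0 : 0 < del by rewrite divr_gt0.
  have hdel : del * (`|a| + 2) = eps by rewrite /del mulrAC -mulrA divff ?gt_eqF // mulr1.
  have NB := @filterI _ (nbhs phi) _ _ _ (nbhs_coord phi (a *: x + z) _ d0)
      (@filterI _ (nbhs phi) _ _ _ (nbhs_coord phi x _ d0) (nbhs_coord phi z _ d0)).
  have NB' := NB (nbhs_filter phi) (nbhs_filter phi).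
  have [psi [lpsi [h1 [h2 h3]]]] := meet _ _ Glin NB'.
  move: h1 h2 h3 => /=; rewrite lpsi => h1 h2 h3.
  have h4 : `|a * (psi x - phi x)| <= `|a| * del by rewrite normrM ler_wpM2l // ltW.
  move: h1 h3 h4; rewrite !ltr_norml ler_norml => /andP[h1 h1'] /andP[h3 h3'] /andP[h4 h4'].
  apply/andP; split; lra.
have phixi : forall y, phi (xi y) = 0.
  move=> y; apply: small0 => eps e0.
  have e2 : 0 < eps / 2 by rewrite divr_gt0.
  have GA : G [set psi : X -> R | `|psi (xi y)| < eps / 2].
    apply: Fev; have := hcv y; move=> /cvgrPdist_lt /(_ _ e2).
    by apply: filterS => n /=; rewrite sub0r normrN.
  have [psi [h1 h2]] := meet _ _ GA (nbhs_coord phi (xi y) _ e2).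
  move: h1 h2 => /=; rewrite !ltr_norml => /andP[h1 h1'] /andP[h2 h2'].
  apply/andP; split; lra.
have GA : G [set psi : X -> R | exists n, ~ Pk h C n m /\ psi = h n].
  by exists 0%N => n _ nP; exists n.
have NB : nbhs phi [set psi : X -> R | forall i : 'I_m,
    `|psi (e i) - phi (e i)| < (m.+1%:R)^-1].
  by apply: (@filter_forall _ _ _ (nbhs phi) (nbhs_filter phi)) => i; apply: nbhs_coord; rewrite invr_gt0 ltr0n.
have [psi [[n [nP ->]] hn]] := meet _ _ GA NB.
by apply: nP; exists phi; split => // i im; exact: (hn (Ordinal im)).
Qed.
End Key.

Lemma dense_seq (X : normedModType R) : (exists D : set X, countable D /\ closure D = setT) ->
  exists e : nat -> X, forall x eps, 0 < eps -> exists i, `|x - e i| < eps.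
Proof.
move=> [D [cD clD]].
have [g sg] := pcard_surjP cD.
exists g => x eps e0.
have : closure D x by rewrite clD.
move=> /(_ _ (nbhsx_ballx x eps e0)) [d [Dd bd]].
move: bd; have [i _ <-] := sg d Dd.
by rewrite -ball_normE => bd; exists i.
Qed.

Lemma linf_bound_cont (V : normedModType R) (f : V -> R) :
  linf f -> continuous f -> exists C, 0 < C /\ forall x, `|f x| <= C * `|x|.
Proof. exact: cont_bounded. Qed.

Section Lift.
Variables (X : completeNormedModType R) (Y : normedModType R) (xi : Y -> X).
Hypothesis xilin : forall a y y', xi (a *: y + y') = a *: xi y + xi y'.
Hypothesis xiiso : forall y, `|xi y| = `|y|.
Hypothesis xicl : closed (range xi).
Variable e : nat -> X.
Hypothesis edense : forall x eps, 0 < eps -> exists i, `|x - e i| < eps.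

Let xiB y y' : xi (y - y') = xi y - xi y'.
Proof. by rewrite -scaleN1r addrC xilin scaleN1r addrC. Qed.

Lemma lift (f : X -> R) (g : nat -> Y -> R) :
  linf f -> continuous f -> (forall n, linf (g n) /\ continuous (g n)) ->
  (forall y, (fun n => g n y) @ \oo --> f (xi y)) ->
  exists fs : nat -> X -> R, [/\ (forall n, linf (fs n) /\ continuous (fs n)),
    (forall n y, fs n (xi y) = g n y) &
    (forall x, (fun n => fs n x) @ \oo --> f x)].
Proof.
move=> flin fcont gd gcv.
have [Cf [Cf0 hCf]] := cont_bounded _ flin fcont.
pose u n y := g n y - f (xi y).
have ulin : forall n, linf (u n).
  move=> n a y y'; rewrite /u (proj1 (gd n)) xilin flin; ring.
have ucont : forall n, continuous (u n).
  move=> n; have [Cg [Cg0 hCg]] := cont_bounded _ (proj1 (gd n)) (proj2 (gd n)).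
  apply: (bounded_cont _ (Cg + Cf) (ulin n)) => y.
  rewrite /u mulrDl; apply: (le_trans (ler_normB _ _)); apply: lerD => //.
  by rewrite -xiiso.
have ucv : forall y, (fun n => u n y) @ \oo --> (0:R).
  move=> y; apply/cvgrPdist_lt => eps e0.
  have := gcv y; move=> /cvgrPdist_lt /(_ eps e0); apply: filterS => n.
  by rewrite /u sub0r normrN distrC.
have hc := @Y_complete X Y xi xiB xiiso xicl.
have [C [C0 hC]] : exists C, 0 < C /\ forall n y, `|u n y| <= C * `|y|.
  apply: (@unif_bound Y hc u ulin ucont) => y.
  have /cvg_seq_bounded : cvgn (fun n => u n y) by apply/cvg_ex; exists 0.
  move=> [M [_ hM]]; exists (M + 1) => n.
  by apply: (hM (M + 1)) => //; rewrite ltrDl.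
have hb : forall n, exists h : X -> R, [/\ linf h,
    (forall y, h (xi y) = u n y) & forall x, `|h x| <= C * `|x|].
  move=> n.
  have ub : forall y, u n y <= C * `|xi y|.
    by move=> y; rewrite xiiso; apply: (le_trans (ler_norm _)).
  have [psi [plin [pxi pb]]] := @hahn_banach X Y xi (u n) C xilin (ulin n) (ltW C0) ub.
  exists psi; split => // x; rewrite ler_norml pb andbT.
  by rewrite lerNl -(linfN _ _ plin) -(normrN x) pb.
have [h hh] := choice hb.
have hlin : forall n, linf (h n) by move=> n; case: (hh n).
have hxi : forall n y, h n (xi y) = u n y by move=> n; case: (hh n).
have hbd : forall n x, `|h n x| <= C * `|x| by move=> n; case: (hh n).
have hcv : forall y, (fun n => h n (xi y)) @ \oo --> (0:R).
  move=> y; rewrite (_ : (fun n => h n (xi y)) = (fun n => u n y)); first exact: ucv.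
  by apply/funext => n; apply: hxi.
have hkey := fun m => @key _ _ xi e h C m (ltW C0) hlin hbd hcv.
have [N hN] := choice hkey.
pose N' := fix N' m := if m is m'.+1 then maxn (N' m').+1 (N m) else 0%N.
have N'S : forall m, N' m.+1 = maxn (N' m).+1 (N m.+1) by [].
have geN' : forall m, (m <= N' m)%N.
  elim=> [//|m IH]; rewrite N'S; apply: leq_trans (leq_maxl _ _); by rewrite ltnS.
have PN' : forall m n, (N' m <= n)%N -> Pk _ _ xi e h C n m.
  case=> [|m] n hn.
  - exists (fun _ => 0); split => //.
    + by move=> a x z; rewrite mulr0 addr0.
    + by move=> x; rewrite normr0 mulr_ge0 // ltW.
  - by apply: hN; apply: leq_trans hn; rewrite N'S leq_maxr.
have mm : forall n, exists m, (N' m <= n)%N /\ forall j, (N' j <= n)%N -> (j <= m)%N.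
  move=> n; have ex : exists i, (fun m => (N' m <= n)%N) i by exists 0%N.
  have ub : forall i, (fun m => (N' m <= n)%N) i -> (i <= n)%N.
    by move=> i hi; exact: leq_trans (geN' i) hi.
  by case: (@ex_maxnP (fun m => (N' m <= n)%N) n ex ub) => i hi hmax; exists i.
have [M hM] := choice mm.
have hk : forall n, Pk _ _ xi e h C n (M n) by move=> n; apply: PN'; case: (hM n).
have [k hkk] := choice hk.
exists (fun n x => f x + h n x - k n x); split.
- move=> n; case: (hkk n) => klin kxi kb _.
  have L : linf (fun x => f x + h n x - k n x).
    by move=> a x z; rewrite flin (hlin n) klin; ring.
  split => //; apply: (bounded_cont _ (Cf + C + C) L) => x.
  rewrite !mulrDl; apply: (le_trans (ler_normB _ _)); apply: lerD => //.
  by apply: (le_trans (ler_normD _ _)); apply: lerD.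
- by move=> n y; case: (hkk n) => _ kxi _ _; rewrite kxi hxi /u; ring.
- move=> x; apply/cvgrPdist_lt => eps e0.
  have C4 : 0 < 4 * C by rewrite mulr_gt0.
  have e4 : 0 < eps / (4 * C) by rewrite divr_gt0.
  have [i hi] := edense x _ e4.
  set M0 := Num.Def.trunc (2 / eps).
  have hM0 : 2 / eps < M0.+1%:R by apply: truncnS_gt.
  set L := maxn i.+1 M0.
  exists (N' L) => // n /= hn.
  have hML : (L <= M n)%N by case: (hM n) => _; apply.
  case: (hkk n) => klin _ kb kclose.
  have hi' := kclose i (leq_trans (leq_maxl _ _) hML).
  have hsmall : ((M n).+1%:R)^-1 < eps / 2 :> R.
    have p1 : 0 < (M n).+1%:R :> R by rewrite ltr0n.
    have p2 : 0 < M0.+1%:R :> R by rewrite ltr0n.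
    apply: (le_lt_trans (y := (M0.+1%:R)^-1)).
      rewrite lef_pV2 ?posrE // ler_nat ltnS.
      by apply: leq_trans hML; apply: leq_maxr.
    rewrite -[eps / 2]invf_div ltf_pV2 ?posrE //.
    by rewrite divr_gt0.
  have hC1 : `|h n (x - e i)| < eps / 4.
    apply: (le_lt_trans (hbd n _)).
    rewrite (_ : eps / 4 = C * (eps / (4 * C))); last by field; rewrite gt_eqF.
    by rewrite ltr_pM2l.
  have hC2 : `|k n (x - e i)| < eps / 4.
    apply: (le_lt_trans (kb _)).
    rewrite (_ : eps / 4 = C * (eps / (4 * C))); last by field; rewrite gt_eqF.
    by rewrite ltr_pM2l.
  rewrite (linfB _ _ _ (hlin n)) in hC1; rewrite (linfB _ _ _ klin) in hC2.
  have hi'' := lt_trans hi' hsmall.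
  move: hC1 hC2 hi''; rewrite !ltr_norml => /andP[? ?] /andP[? ?] /andP[? ?].
  apply/andP; split; lra.
Qed.
End Lift.

Lemma wsd_unfold (V : normedModType R) (O : Type) (lt : O -> O -> Prop)
  (wf : well_founded lt) (G : set (V -> R)) (a : O) :
  wstar_derived wf G a = [set f | ((forall b, ~ lt b a) /\ G f) \/
     exists b (h : lt b a), wstar_derived1 (wstar_derived wf G b) f].
Proof.
rewrite /wstar_derived Fix_eq //.
move=> x f1 f2 hf.
have -> : f1 = f2.
  apply: functional_extensionality_dep => b.
  apply: functional_extensionality_dep => h; exact: hf.
by [].
Qed.

Lemma wsd_dual (V : normedModType R) (O : Type) (lt : O -> O -> Prop)
  (wf : well_founded lt) (G : set (V -> R)) (a : O) :
  G `<=` @is_dual R V -> wstar_derived wf G a `<=` @is_dual R V.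
Proof.
move=> GD f; rewrite wsd_unfold => -[[_ Gf]|[b [_ [df _]]]]; [exact: GD|exact: df].
Qed.

End Main.

Theorem lemma1 (R : realType) (X : completeNormedModType R) (Y : normedModType R)
  (xi : Y -> X) (Gamma : set (Y -> R))
  (O : Type) (lt : O -> O -> Prop) (wf : well_founded lt) (alpha : O) :
  strict_well_order lt ->
  separable X ->
  is_linear_map xi -> (forall y : Y, `|xi y| = `|y|) -> closed (range xi) ->
  dual_subspace Gamma ->
  adj_preimage xi (wstar_derived wf Gamma alpha) =
  wstar_derived wf (adj_preimage xi Gamma) alpha.
Proof.
move=> _ sepX xilin xiiso xicl [GD _].
have [e edense] := @dense_seq R X sepX.
have compd : forall f : X -> R, is_dual f -> is_dual (f \o xi).
  move=> f [flin fcont].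
  have [Cf [Cf0 hCf]] := @cont_bounded R _ _ flin fcont.
  have L : @linf R _ (f \o xi) by move=> a y y'; rewrite /= xilin flin.
  split => //; apply: (@bounded_cont R _ _ Cf L) => y; rewrite /= -xiiso; exact: hCf.
elim/(well_founded_induction wf): alpha => a IH.
rewrite (@wsd_unfold R _ _ _ wf Gamma a) (@wsd_unfold R _ _ _ wf (adj_preimage xi Gamma) a).
apply/seteqP; split => f.
- move=> [df [[hmin hG]|[b [hb [dfx [g [hg gcv]]]]]]].
    by left; split.
  right; exists b, hb; rewrite -(IH b hb); split => //.
  have gd : forall n, @linf R _ (g n) /\ continuous (g n).
    move=> n; exact: (@wsd_dual R _ _ _ wf _ b GD _ (hg n)).
  have [fs [fsd fsxi fscv]] := @lift R X Y xi xilin xiiso xicl e edense f g (proj1 df) (proj2 df) gd gcv.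
  exists fs; split => // n; split; first exact: fsd.
  rewrite (_ : fs n \o xi = g n) //; apply/funext => y; exact: fsxi.
- move=> [[hmin [df hG]]|[b [hb [df [fs [hfs fcv]]]]]].
    by split => //; left.
  split => //; right; exists b, hb; split; first exact: compd.
  exists (fun n => fs n \o xi); split.
    by move=> n; rewrite -(IH b hb) in hfs; case: (hfs n).
  by move=> v; exact: fcv.
Qed.
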